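(* Let $P$ be a finite lattice and $f\in\mathcal{L}_P$. Let $\check{\mathcal{S}}_f$ be the set of minimal elements of $\mathcal{S}_f=\{s\in\mathcal{L}_P:f+s=1\}$ and $\hat{\mathcal{W}}_f$ the set of maximal elements of $\mathcal{W}_f=\{w\in\mathcal{L}_P:w\le f,\ w\text{ prime}\}$. Then the operator $\neg$ restricts to a bijection from $\check{\mathcal{S}}_f$ onto $\hat{\mathcal{W}}_f$.
   Context: $P$ is a finite lattice with greatest element $\hat p$. $\mathcal{L}_P$ is the set of maps $f:P\to P$ satisfying (A.1) $a\le f(a)$; (A.2) $a\le b\Rightarrow f(a)\le f(b)$; (A.3) $f(f(a))=f(a)$, ordered pointwise; it is a lattice with join $+$ and greatest element $1:a\mapsto\hat p$. $\Phi f=\{a:f(a)=a\}$. $f$ is prime if $P\setminus\Phi f$ is closed under $\wedge$; for prime $f$, $\neg f$ is the (prime) element of $\mathcal{L}_P$ with $\Phi(\neg f)=(P\setminus\Phi f)\cup\{\hat p\}$. (Minimal elements of $\mathcal{S}_f$ are prime, so $\neg$ is defined on them.) *)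

(* Defs.v *)
From HB Require Import structures.
From mathcomp Require Import all_boot all_order.
Set Implicit Arguments. Unset Strict Implicit. Unset Printing Implicit Defensive.
Import Order.TTheory.
Local Open Scope order_scope.

Section ClosureOps.
Context {d : Order.disp_t} {P : finTBLatticeType d}.

Definition closure_op (f : P -> P) : Prop :=
  [/\ forall a, a <= f a,
      forall a b, a <= b -> f a <= f b
    & forall a, f (f a) = f a].

Definition op_le (f g : P -> P) : Prop := forall a, f a <= g a.

Definition op_one : P -> P := fun _ => \top.

Definition is_op_join (f g h : P -> P) : Prop :=
  [/\ closure_op h, op_le f h, op_le g h
    & forall k, closure_op k -> op_le f k -> op_le g k -> op_le h k].

Definition Phi (f : P -> P) : pred P := fun a => f a == a.

Definition prime_op (f : P -> P) : Prop :=
  forall a b, ~~ Phi f a -> ~~ Phi f b -> ~~ Phi f (a `&` b).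

(* neg f : the closure operator whose fixed-point set is
   (P \ Phi f) U {top}: maps a to the meet of all such fixed points above a. *)
Definition neg_op (f : P -> P) : P -> P :=
  fun a => \meet_(x | (a <= x) && (~~ Phi f x || (x == \top))) x.

Definition S_set (f s : P -> P) : Prop :=
  closure_op s /\ is_op_join f s op_one.

Definition W_set (f w : P -> P) : Prop :=
  [/\ closure_op w, op_le w f & prime_op w].

Definition minimal_in (S : (P -> P) -> Prop) (s : P -> P) : Prop :=
  S s /\ forall s', S s' -> op_le s' s -> s' = s.

Definition maximal_in (S : (P -> P) -> Prop) (w : P -> P) : Prop :=
  S w /\ forall w', S w' -> op_le w w' -> w' = w.

End ClosureOps.

(* Main.v *)
Require Import Defs.
From HB Require Import structures.
From mathcomp Require Import all_boot all_order.
From mathcomp Require Import zify.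
From Stdlib Require Import Classical FunctionalExtensionality.
Set Implicit Arguments. Unset Strict Implicit. Unset Printing Implicit Defensive.
Import Order.TTheory.
Local Open Scope order_scope.

Section Aux.
Context {d : Order.disp_t} {P : finTBLatticeType d}.
Implicit Types (f g k s w : P -> P) (M : pred P).

Definition cl M : P -> P := fun a => \meet_(x | (a <= x) && M x) x.
Definition moore M := M \top /\ forall a b, M a -> M b -> M (a `&` b).

Lemma cl_ge M a : a <= cl M a.
Proof. by apply/meetsP => x /andP[]. Qed.

Lemma cl_in M a : moore M -> M (cl M a).
Proof.
move=> [Mt MI]; rewrite /cl; apply: (big_ind (fun x => M x)) => //.
by move=> x /andP[].
Qed.

Lemma cl_fix M a : M a -> cl M a = a.
Proof.
move=> Ma; apply/le_anti; rewrite cl_ge andbT.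
by apply: meets_inf; rewrite lexx Ma.
Qed.

Lemma cl_closure M : moore M -> closure_op (cl M).
Proof.
move=> HM; split.
- exact: cl_ge.
- move=> a b ab; apply/meetsP => x /andP[bx Mx]; apply: meets_inf.
  by rewrite (le_trans ab bx) Mx.
- move=> a; exact: cl_fix (cl_in a HM).
Qed.

Lemma Phi_cl M x : moore M -> Phi (cl M) x = M x.
Proof.
move=> HM; rewrite /Phi; apply/eqP/idP => [<-|Mx]; [exact: cl_in | exact: cl_fix].
Qed.

Lemma closure_moore f : closure_op f -> moore (Phi f).
Proof.
case=> ext mon idem; split.
- by rewrite /Phi; apply/eqP/le_anti; rewrite lex1 ext.
- move=> a b; rewrite /Phi => /eqP fa /eqP fb; apply/eqP/le_anti.
  rewrite ext andbT lexI; apply/andP; split; [rewrite -{2}fa | rewrite -{2}fb];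
    apply: mon; [exact: leIl | exact: leIr].
Qed.

Lemma Phi_top f : closure_op f -> Phi f \top.
Proof. by move=> /closure_moore []. Qed.

Lemma closure_cl f : closure_op f -> f = cl (Phi f).
Proof.
case=> ext mon idem; apply: functional_extensionality => a; apply/le_anti/andP; split.
- apply/meetsP => x /andP[ax /eqP fx]; by rewrite -fx; apply: mon.
- by apply: meets_inf; rewrite ext /Phi idem eqxx.
Qed.

Lemma closure_eq f g : closure_op f -> closure_op g ->
  (forall x, Phi f x = Phi g x) -> f = g.
Proof.
move=> cf cg e; rewrite (closure_cl cf) (closure_cl cg) /cl.
apply: functional_extensionality => a; apply: eq_bigl => x; by rewrite e.
Qed.

Lemma le_phi g k : closure_op g -> closure_op k ->
  (op_le g k <-> forall x, Phi k x -> Phi g x).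
Proof.
move=> [eg mg ig] [ek mk ik]; split.
- move=> le x /eqP kx; rewrite /Phi; apply/eqP/le_anti; rewrite eg andbT.
  by rewrite -{2}kx; apply: le.
- move=> H a; have /eqP <- : Phi g (k a) by apply: H; rewrite /Phi ik.
  by apply: mg; apply: ek.
Qed.

Lemma op_one_closure : closure_op (@op_one d P).
Proof. by split => * //; rewrite /op_one lex1. Qed.

Lemma S_char f s : closure_op f -> closure_op s ->
  (is_op_join f s op_one <-> forall x, Phi f x -> Phi s x -> x = \top).
Proof.
move=> cf cs; split.
- case=> _ _ _ H x fx sx.
  pose M := fun y => Phi f y && Phi s y.
  have HM : moore M.
    have [ft fI] := closure_moore cf; have [st sI] := closure_moore cs.
    split; first by rewrite /M ft st.
    move=> a b /andP[fa sa] /andP[fb sb]; by rewrite /M fI ?sI.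
  have ck := cl_closure HM.
  have h1 : op_le f (cl M) by apply/(le_phi cf ck) => y; rewrite Phi_cl // /M => /andP[].
  have h2 : op_le s (cl M) by apply/(le_phi cs ck) => y; rewrite Phi_cl // /M => /andP[].
  have := H _ ck h1 h2 x; rewrite /op_one cl_fix ?le1x; first by move/eqP.
  by rewrite /M fx sx.
- move=> H; split; [exact: op_one_closure | move=> a; exact: lex1
                   | move=> a; exact: lex1 |].
  move=> k ck fk sk a; rewrite /op_one le1x; apply/eqP.
  have [ek _ ik] := ck.
  have kk : Phi k (k a) by rewrite /Phi ik.
  apply: H; [apply: (proj1 (le_phi cf ck) fk) | apply: (proj1 (le_phi cs ck) sk)];
    exact: kk.
Qed.

Lemma min_ext f s a : closure_op f -> minimal_in (S_set f) s -> ~~ Phi s a ->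
  exists m, [&& Phi s m, Phi f (a `&` m) & a `&` m != \top].
Proof.
move=> cf [[cs js] mins] na.
apply: NNPP => hno.
have [st sI] := closure_moore cs.
pose M := fun y => Phi s y || [exists m, Phi s m && (y == a `&` m)].
have HM : moore M.
  split; first by rewrite /M st.
  move=> x y; rewrite /M => /orP[sx|/existsP[m /andP[sm /eqP->]]]
    /orP[sy|/existsP[m' /andP[sm' /eqP->]]].
  - by rewrite sI.
  - apply/orP; right; apply/existsP; exists (x `&` m').
    by rewrite sI //= meetCA eqxx.
  - apply/orP; right; apply/existsP; exists (m `&` y).
    by rewrite sI //= meetA eqxx.
  - apply/orP; right; apply/existsP; exists (m `&` m').
    by rewrite sI //= meetACA meetxx eqxx.
have ck := cl_closure HM.
have Sk : S_set f (cl M).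
  split => //; apply/(S_char cf ck) => x fx; rewrite Phi_cl // /M
    => /orP[sx|/existsP[m /andP[sm /eqP ex]]].
  - exact: (proj1 (S_char cf cs) js).
  - apply: NNPP => nt; apply: hno; exists m; rewrite sm -ex fx /=.
    by apply/eqP.
have le : op_le (cl M) s by apply/(le_phi ck cs) => y sy; rewrite Phi_cl // /M sy.
have e := mins _ Sk le.
move: na; rewrite -e Phi_cl // /M; move/negP; apply; apply/orP; right.
by apply/existsP; exists \top; rewrite st meetx1 eqxx.
Qed.

Lemma min_prime f s : closure_op f -> minimal_in (S_set f) s -> prime_op s.
Proof.
move=> cf ms a b na nb; have [[cs js] _] := ms.
have [m /and3P[sm fam nam]] := min_ext cf ms na.
have [m' /and3P[sm' fbm nbm]] := min_ext cf ms nb.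
apply/negP => sab.
have [_ fI] := closure_moore cf; have [_ sI] := closure_moore cs.
have e : (a `&` m) `&` (b `&` m') = \top.
  apply: (proj1 (S_char cf cs) js); first exact: fI.
  rewrite meetACA; exact: sI (sI _ _ sm sm').
move/eqP: nam; apply; apply/eqP; rewrite -le1x -e; exact: leIl.
Qed.

Lemma neg_moore s : closure_op s -> prime_op s ->
  moore (fun x => ~~ Phi s x || (x == \top)).
Proof.
move=> cs ps; split; first by rewrite eqxx orbT.
move=> a b /orP[na|/eqP->] /orP[nb|/eqP->].
- by rewrite (ps _ _ na nb).
- by rewrite meetx1 na.
- by rewrite meet1x nb.
- by rewrite meetx1 eqxx orbT.
Qed.

Lemma Phi_neg s x : closure_op s -> prime_op s ->
  Phi (neg_op s) x = ~~ Phi s x || (x == \top).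
Proof. move=> cs ps; exact: (Phi_cl x (neg_moore cs ps)). Qed.

Lemma neg_closure s : closure_op s -> prime_op s -> closure_op (neg_op s).
Proof. move=> cs ps; exact: (cl_closure (neg_moore cs ps)). Qed.

Lemma W_to_S f w : closure_op f -> W_set f w -> S_set f (neg_op w).
Proof.
move=> cf [cw wf pw]; have cn := neg_closure cw pw.
split => //; apply/(S_char cf cn) => x fx; rewrite Phi_neg // => /orP[nw|/eqP//].
exfalso; move/negP: nw; apply; exact: (proj1 (le_phi cw cf) wf x fx).
Qed.

Lemma part1 f s : closure_op f -> minimal_in (S_set f) s ->
  maximal_in (W_set f) (neg_op s).
Proof.
move=> cf ms; have [[cs js] mins] := ms; have ps := min_prime cf ms.
have cn := neg_closure cs ps.
have SC := proj1 (S_char cf cs) js.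
have [_ sI] := closure_moore cs.
split.
- split => //.
  + apply/(le_phi cn cf) => x fx; rewrite Phi_neg //.
    have [->|nt] := eqVneq x \top; first by rewrite orbT.
    rewrite orbF; apply/negP => sx; move/eqP: nt; apply; exact: SC.
  + move=> a b; rewrite !Phi_neg // !negb_or !negbK => /andP[sa nat] /andP[sb _].
    apply/andP; split; first exact: sI.
    apply: contra nat => /eqP e; rewrite -le1x -e; exact: leIl.
- move=> w Ww le; have [cw wf pw] := Ww.
  have cnw := neg_closure cw pw.
  have Sk := W_to_S cf Ww.
  have lek : op_le (neg_op w) s.
    apply/(le_phi cnw cs) => x sx; rewrite Phi_neg //.
    have [->|nt] := eqVneq x \top; first by rewrite orbT.
    rewrite orbF; apply/negP => wx.
    have := proj1 (le_phi cn cw) le x wx; rewrite Phi_neg // sx /=.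
    by rewrite (negbTE nt).
  have e := mins _ Sk lek.
  apply: (closure_eq cw cn) => x; rewrite Phi_neg // -e Phi_neg //.
  rewrite negb_or negbK.
  have [->|nt] := eqVneq x \top; first by rewrite Phi_top // orbT.
  by rewrite andbT !orbF.
Qed.

Lemma exists_min f s0 : closure_op f -> S_set f s0 ->
  exists2 s, minimal_in (S_set f) s & op_le s s0.
Proof.
move=> cf S0.
suff H : forall n s1, S_set f s1 -> #|P| - #|[set x | Phi s1 x]| < n ->
    exists2 s, minimal_in (S_set f) s & op_le s s1.
  by apply: (H _ _ S0); exact: ltnSn.
elim=> [|n IH] s1 S1 hn //.
case: (classic (minimal_in (S_set f) s1)) => [m|nm].
  by exists s1 => // a; exact: lexx.
have [s' [Ss' [le ne]]] : exists s', S_set f s' /\ op_le s' s1 /\ s' <> s1.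
  apply: NNPP => h; apply: nm; split => // s' Ss' le; apply: NNPP => ne.
  by apply: h; exists s'.
have [c1 _] := S1; have [c' _] := Ss'.
have card : #|[set x | Phi s1 x]| < #|[set x | Phi s' x]|.
  apply: proper_card; rewrite properEneq; apply/andP; split.
  - apply/eqP => E; apply: ne; apply: (closure_eq c' c1) => x.
    by move/setP: E => /(_ x); rewrite !inE.
  - apply/subsetP => x; rewrite !inE; exact: (proj1 (le_phi c' c1) le x).
have := max_card [set x | Phi s' x].
move=> hmax.
have [s ms les] : exists2 s, minimal_in (S_set f) s & op_le s s'.
  apply: IH Ss' _; move: hn card hmax.
  set A := #|[set x | Phi s1 x]|; set B := #|[set x | Phi s' x]|; set N := #|P|.
  move=> *; lia.
exists s => // a; exact: le_trans (les a) (le a).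
Qed.

End Aux.

Theorem mainTheorem15 (d : Order.disp_t) (P : finTBLatticeType d) (f : P -> P) :
  closure_op f ->
  [/\ (forall s, minimal_in (S_set f) s -> maximal_in (W_set f) (neg_op s)),
      (forall s1 s2, minimal_in (S_set f) s1 -> minimal_in (S_set f) s2 ->
         neg_op s1 = neg_op s2 -> s1 = s2)
    & (forall w, maximal_in (W_set f) w ->
         exists2 s, minimal_in (S_set f) s & neg_op s = w)].
Proof.
move=> cf; split.
- move=> s; exact: part1.
- move=> s1 s2 m1 m2 e.
  have [[c1 _] _] := m1; have [[c2 _] _] := m2.
  have p1 := min_prime cf m1; have p2 := min_prime cf m2.
  apply: (closure_eq c1 c2) => x.
  have := congr1 (fun g => Phi g x) e; rewrite /= !Phi_neg //.
  have [->|nt] := eqVneq x \top; first by rewrite !Phi_top.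
  by rewrite !orbF => /(congr1 negb); rewrite !negbK.
- move=> w [Ww maxw]; have [cw wf pw] := Ww.
  have cnw := neg_closure cw pw.
  have [s ms le] := exists_min cf (W_to_S cf Ww).
  exists s => //.
  have [[cs _] _] := ms; have ps := min_prime cf ms.
  have cn := neg_closure cs ps.
  have mx := part1 cf ms.
  apply: (maxw _ (proj1 mx)).
  apply/(le_phi cw cn) => x; rewrite Phi_neg //; case/orP => [ns|/eqP->];
    last exact: Phi_top.
  move: ns; apply: contraR => nw; apply: (proj1 (le_phi cs cnw) le).
  by rewrite Phi_neg // nw.
Qed.
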